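(* Let $\epsilon > 0$ and $N \geq 1$ be real numbers. Let $\alpha$ be a real number and suppose there are integers $a$ and $q$ with $1 \leq q \leq N^{4/3}$, $\gcd(a,q) = 1$, and $\left|\alpha - \frac{a}{q}\right| \leq \frac{1}{q N^{4/3}}$. Then there exist integers $a_1, a_2$ and integers $1 \leq q_1, q_2 \leq N$ such that $$\left|\alpha - \frac{a_1}{q_1} - \frac{a_2}{q_2}\right| \leq \frac{C_\epsilon}{q N^{4/3 - \epsilon}},$$ where $C_\epsilon>0$ is a constant depending only on $\epsilon$. *)

(* Defs.v *)
From Stdlib Require Import Reals ZArith Znumtheory.

(* Main.v *)
Require Import Defs.
From Stdlib Require Import Reals ZArith Znumtheory.
From Stdlib Require List.
Require mathcomp.boot.all_boot.
Module PiB.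
Import mathcomp.boot.all_boot.
Local Open Scope nat_scope.

Lemma sum_le_t M t : \sum_(1 <= k < M.+1) (k <= t : nat) <= minn M t.
Proof.
elim: M => [|M IH]; first by rewrite big_geq.
rewrite big_nat_recr //.
case: (leqP M.+1 t) => H.
- have HM : M <= t by apply: ltnW.
  move/minn_idPl: (HM) => E1.
  rewrite /= addn1. by move: IH; rewrite E1.
- have -> : forall x, ssrnat_addn__canonical__Monoid_Law x false = x by move=> x; rewrite /= addn0.
  have {}H : t <= M := H.
  move/minn_idPr: (H) => E1. by rewrite E1 in IH.
Qed.

Lemma logn_bin p m : prime p -> 0 < m -> p ^ logn p 'C(m.*2, m) <= m.*2.
Proof.
move=> pp m0.
have p1 : 1 < p by apply: prime_gt1.
set t := trunc_log p m.*2.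
have m2 : 0 < m.*2 by rewrite double_gt0.
apply: leq_trans (trunc_logP p1 m2). rewrite leq_exp2l //.
have H := bin_fact (leq_addr m m).
rewrite addnK in H.
have := congr1 (logn p) H.
rewrite lognM ?muln_gt0 ?fact_gt0 ?bin_gt0 ?leq_addr // lognM ?fact_gt0 // !logn_fact //.
have E1 : \sum_(1 <= k < m.+1) m %/ p ^ k = \sum_(1 <= k < (m+m).+1) m %/ p ^ k.
  rewrite [RHS](big_cat_nat _ (n := m.+1)) //=; last by rewrite ltnS leq_addr.
  rewrite [X in _ + X]big1_seq ?addn0 // => k /andP[_]; rewrite mem_iota => /andP[Hk _].
  apply: divn_small. apply: leq_trans (ltn_expl _ p1). exact: ltnW.
rewrite E1 => Heq.
have Hle : \sum_(1 <= k < (m+m).+1) (m + m) %/ p ^ k <=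
   \sum_(1 <= k < (m+m).+1) (m %/ p ^ k + m %/ p ^ k + (k <= t : nat)).
  apply: leq_sum => k _.
  case: (leqP k t) => Hk.
  - by apply: leq_divDl.
  - have -> : (m + m) %/ p ^ k = 0; last by [].
    apply: divn_small.
    rewrite ltnNge. apply/negP => Hc.
    have := trunc_log_max p1 Hc. rewrite /t addnn. by rewrite leqNgt Hk.
rewrite !big_split /= -Heq in Hle.
have HT := sum_le_t (m+m) t.
have HT' : \sum_(1 <= k < (m+m).+1) (k <= t : nat) <= t by apply: leq_trans HT (geq_minr _ _).
rewrite -/(m.*2) in Heq Hle *. rewrite addnn in Hle HT'.
move: Hle. set X := (\sum_(1 <= i < (m.*2).+1) m %/ p ^ i).
move=> Hle. rewrite addnC in Hle.
have := leq_trans Hle (leq_add (leqnn (X + X)) HT').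
by rewrite leq_add2l.
Qed.


Lemma bin_ge m : 2 ^ m <= 'C(m.*2, m).
Proof.
elim: m => [|m IH] //.
have H := mul_bin_diag (m.*2.+2) m.
have H2 : 'C(m.*2, m) <= 'C(m.*2.+1, m).
  case: m {IH H} => [|m] //. rewrite [X in _ <= X]binS. apply: leq_addr.
have E : (m.+1).*2 = m.*2.+2 by rewrite doubleS.
rewrite E.
have H3 : m.+1 * 2 ^ m.+1 <= m.+1 * 'C(m.*2.+2, m.+1).
  rewrite -H /=. rewrite expnS.
  have -> : m.*2.+2 = m.+1 * 2 by rewrite muln2 doubleS.
  rewrite -mulnA. rewrite leq_pmul2l //. rewrite leq_pmul2l //.
  exact: leq_trans IH H2.
by rewrite leq_pmul2l in H3.
Qed.


Lemma prod_const_seq (s : seq nat) c : \prod_(p <- s) c = c ^ size s.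
Proof. elim: s => [|x s IH]; first by rewrite big_nil. by rewrite big_cons IH expnS. Qed.

Lemma count_mono n k : k <= n -> count prime (iota 0 k.+1) <= count prime (iota 0 n.+1).
Proof.
move=> kn. have -> : n.+1 = k.+1 + (n - k) by rewrite addSn subnKC.
by rewrite iotaD count_cat leq_addr.
Qed.

Lemma pi_bound n l : 2 <= n -> n < 2 ^ l -> n.-1 <= (l * count prime (iota 0 n.+1)).*2.
Proof.
move=> n2 nl.
set m := n./2.
have m0 : 0 < m by rewrite /m -(half_double 1) half_leq.
have mn : m.*2 <= n.
  have := odd_double_half n. rewrite -/m => <-. by rewrite leq_addl.
have nm : n.-1 <= m.*2.
  have := odd_double_half n. rewrite -/m => E. rewrite -{1}E. case: (odd n) => //=.
  by rewrite add0n leq_pred.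
apply: leq_trans nm _. rewrite leq_double.
set C := 'C(m.*2, m).
have Cp : 0 < C by rewrite bin_gt0 -addnn leq_addr.
have HC : C <= (2 ^ l) ^ size (primes C).
  rewrite {1}(prod_prime_decomp Cp) prime_decompE big_map /= -prod_const_seq.
  apply: leq_prod => p _. 
  case Hp : (p \in primes C); last first.
    have -> : logn p C = 0. apply/eqP. rewrite -leqn0 leqNgt logn_gt0 Hp //.
    by rewrite expn0 expn_gt0.
  move: (Hp); rewrite mem_primes => /and3P[pp _ _].
  apply: ltnW. apply: leq_ltn_trans nl. apply: leq_trans mn.
  exact: logn_bin.
have Hs : size (primes C) <= count prime (iota 0 n.+1).
  apply: leq_trans _ (count_mono _ _ mn). rewrite -size_filter.
  apply: uniq_leq_size; first exact: primes_uniq.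
  move=> p Hp. rewrite mem_filter. move: (Hp); rewrite mem_primes => /and3P[pp _ pd].
  rewrite pp andTb mem_iota add0n ltnS leq0n andTb.
  apply: leq_trans _ (logn_bin _ _ pp m0).
  have : 0 < logn p C by rewrite logn_gt0.
  case: (logn p C) => // k _. rewrite expnS. apply: leq_pmulr. by rewrite expn_gt0 prime_gt0.
have := leq_trans (bin_ge m) HC. rewrite -expnM leq_exp2l // => H1.
apply: leq_trans H1 _. by rewrite leq_mul2l Hs orbT.
Qed.


Definition primeb (x : nat) : bool := prime x.
Definition PL Y n := filter primeb (iota Y.+1 (n - Y)).

Lemma in_mem (s : seq nat) x : List.In x s -> x \in s.
Proof. elim: s => [|y s IH] //= [->|H]; rewrite in_cons ?eqxx //. by rewrite IH ?orbT. Qed.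

Lemma uniq_NoDup (s : seq nat) : uniq s -> List.NoDup s.
Proof.
elim: s => [|y s IH] /=; first by constructor.
move=> /andP[H1 H2]. constructor; last exact: IH.
move=> /in_mem H. by rewrite H in H1.
Qed.

Lemma size_length (s : seq nat) : size s = length s.
Proof. by elim: s => [|y s IH] //=; rewrite IH. Qed.

Lemma PL_in Y n x : List.In x (PL Y n) -> primeb x /\ (Y < x)%coq_nat /\ (x <= n)%coq_nat.
Proof.
move=> /in_mem. rewrite mem_filter mem_iota => /andP[-> /andP[H1 H2]].
split => //. split; apply/leP => //.
case: (leqP Y n) => h.
- by rewrite addSn subnKC // ltnS in H2.
- move: h => /ltnW /eqP h. rewrite h addn0 in H2. by rewrite ltnNge H1 in H2.
Qed.

Lemma PL_nodup Y n : List.NoDup (PL Y n).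
Proof. apply: uniq_NoDup. apply: filter_uniq. exact: iota_uniq. Qed.

Lemma PL_len Y n l : (2 <= n)%coq_nat -> (n < 2 ^ l)%coq_nat -> (Y <= n)%coq_nat ->
  (n - 1 <= 2 * (l * (Y + 1 + length (PL Y n))))%coq_nat.
Proof.
move=> /leP h2 /leP hl /leP hY.
have H := pi_bound _ _ h2 hl.
apply/leP. rewrite -size_length /PL size_filter.
move: H. have -> : n.+1 = Y.+1 + (n - Y) by rewrite addSn subnKC.
rewrite iotaD count_cat add0n => H.
rewrite subn1 mul2n. apply: leq_trans H _. rewrite leq_double leq_mul2l. apply/orP; right.
rewrite addn1 leq_add2r. have := count_size primeb (iota 0 Y.+1). by rewrite size_iota.
Qed.

Lemma prime_bez x y : primeb x -> (0 < y)%coq_nat -> (y < x)%coq_nat ->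
  exists u v, u * x = v * y + 1.
Proof.
move=> px /leP y0 /leP yx.
have x0 : 0 < x by apply: ltn_trans y0 yx.
have [a _ Ha] := Bezoutl y x0.
have cop : coprime x y.
  rewrite prime_coprime //. apply/negP => /(dvdn_leq y0). by rewrite leqNgt yx.
move: cop. rewrite /coprime => /eqP g1. rewrite g1 in Ha.
case/dvdnP: Ha => k Hk. exists k, a. by rewrite -Hk addnC.
Qed.

Lemma expn_pow a b : expn a b = Nat.pow a b.
Proof. elim: b => [|b IH] //. by rewrite expnS IH. Qed.

Lemma PL_len' Y n l : (2 <= n)%coq_nat -> (n < Nat.pow 2 l)%coq_nat -> (Y <= n)%coq_nat ->
  (Nat.sub n 1 <= Nat.mul 2 (Nat.mul l (Nat.add (Nat.add Y 1) (length (PL Y n)))))%coq_nat.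
Proof. move=> h1 h2 h3. rewrite -expn_pow in h2. exact: PL_len. Qed.

End PiB.
From Stdlib Require Import Reals Lra ZArith Lia List FinFun Classical ClassicalEpsilon.
Open Scope Z_scope.

Lemma box_bounds (v q Y : Z) : 0 < q -> 0 <= v < q -> 0 <= Y ->
  (v * (Y+1) / q) * q <= v * (Y+1) < (v * (Y+1) / q + 1) * q /\ 0 <= v * (Y+1) / q <= Y.
Proof.
intros Hq Hv HY.
pose proof (Z.div_mod (v*(Y+1)) q ltac:(lia)) as E.
pose proof (Z.mod_pos_bound (v*(Y+1)) q Hq) as B.
set (b := v * (Y+1) / q) in *. set (c := v * (Y+1) mod q) in *.
assert (0 <= b). { apply Z.div_pos; nia. }
assert (b <= Y). { assert (b * q < (Y+1) * q) by nia. nia. }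
split; [split|]; nia.
Qed.

Lemma dirichlet (r q Y : Z) : 1 <= q -> 1 <= Y ->
  exists y M, 1 <= y <= Y /\ Z.abs (r * y - M * q) * (Y + 1) <= q.
Proof.
intros Hq HY.
set (v := fun j : nat => (r * Z.of_nat j) mod q).
set (f := fun j : nat => Z.to_nat (v j * (Y+1) / q)).
assert (Hv : forall j, 0 <= v j < q) by (intro j; apply Z.mod_pos_bound; lia).
assert (HB : forall j, (Z.of_nat (f j)) * q <= v j * (Y+1) < (Z.of_nat (f j) + 1) * q /\ 0 <= Z.of_nat (f j) <= Y).
{ intro j. unfold f. destruct (box_bounds (v j) q Y ltac:(lia) (Hv j) ltac:(lia)) as [H1 H2].
  rewrite Z2Nat.id by lia. auto. }
assert (Hdm : forall j, r * Z.of_nat j = q * (r * Z.of_nat j / q) + v j).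
{ intro j. apply Z.div_mod. lia. }
set (n := Z.to_nat (Y + 1)).
assert (Hbf : bFun n f).
{ intros j _. destruct (HB j) as [_ H]. unfold n. lia. }
destruct (classic (bInjective n f)) as [Hinj | Hninj].
- apply bInjective_bSurjective in Hinj; auto.
  destruct (Hinj (Z.to_nat Y)) as [j [Hj Hfj]]. { unfold n. lia. }
  destruct (HB j) as [[H1 H2] H3]. rewrite Hfj in H1, H2.
  rewrite Z2Nat.id in H1, H2 by lia.
  assert (j <> 0%nat).
  { intro E. subst j. unfold v in H1. simpl in H1. rewrite Z.mul_0_r, Zmod_0_l in H1. nia. }
  exists (Z.of_nat j), (r * Z.of_nat j / q + 1). split. { unfold n in Hj. lia. }
  pose proof (Hdm j). pose proof (Hv j).
  assert (E : r * Z.of_nat j - (r * Z.of_nat j / q + 1) * q = v j - q) by lia.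
  rewrite E. rewrite Z.abs_neq by lia. nia.
- assert (exists i j, (i < n)%nat /\ (j < n)%nat /\ f i = f j /\ i <> j) as [i [j [Hi [Hj [Hf Hij]]]]].
  { apply NNPP. intro C. apply Hninj. intros i j Hi Hj Hf. apply NNPP. intro Hne.
    apply C. exists i, j. auto. }
  destruct (HB i) as [[Hi1 Hi2] _]. destruct (HB j) as [[Hj1 Hj2] _].
  rewrite Hf in Hi1, Hi2.
  pose proof (Hdm i). pose proof (Hdm j).
  destruct (proj1 (Nat.lt_gt_cases i j) Hij) as [Hlt|Hlt].
  + exists (Z.of_nat j - Z.of_nat i), (r * Z.of_nat j / q - r * Z.of_nat i / q).
    split. { unfold n in Hj. lia. }
    assert (E : r * (Z.of_nat j - Z.of_nat i) - (r * Z.of_nat j / q - r * Z.of_nat i / q) * q = v j - v i) by lia.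
    rewrite E. destruct (Z.abs_spec (v j - v i)) as [[_ ->]|[_ ->]]; nia.
  + exists (Z.of_nat i - Z.of_nat j), (r * Z.of_nat i / q - r * Z.of_nat j / q).
    split. { unfold n in Hi. lia. }
    assert (E : r * (Z.of_nat i - Z.of_nat j) - (r * Z.of_nat i / q - r * Z.of_nat j / q) * q = v i - v j) by lia.
    rewrite E. destruct (Z.abs_spec (v i - v j)) as [[_ ->]|[_ ->]]; nia.
Qed.

Lemma div_small_zero (q z : Z) : (q | z) -> Z.abs z < q -> z = 0.
Proof. intros [k ->] H. destruct (Z.eq_dec k 0) as [->|Hk]; [lia|]. nia. Qed.

Section Core.
Variables (a q : Z) (Y Ym n : nat).
Hypotheses (Hq : 1 <= q) (Hg : Z.gcd a q = 1) (HY : (1 <= Y)%nat).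
Let E := Z.to_nat (q / (Z.of_nat Y + 1)).

Definition BadP (x : nat) (p : Z * Z) : Prop :=
  let e := a * Z.of_nat x * fst p - snd p * q in
  1 <= fst p <= Z.of_nat Ym /\ e <> 0 /\ Z.abs e * (Z.of_nat Y + 1) <= q.

Definition wit (x : nat) : Z * Z := epsilon (inhabits (0%Z, 0%Z)) (BadP x).

Definition code (x : nat) : nat * nat * nat :=
  let p := wit x in
  (Z.to_nat (fst p), Z.to_nat (a * Z.of_nat x * fst p - snd p * q + Z.of_nat E),
   (x / (Y + 1))%nat).

Lemma e_le_E (e : Z) : Z.abs e * (Z.of_nat Y + 1) <= q -> Z.abs e <= Z.of_nat E.
Proof.
intro H. unfold E. rewrite Z2Nat.id by (apply Z.div_pos; lia).
apply Z.div_le_lower_bound; lia.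
Qed.

Lemma same_quot (x1 x2 : nat) : (x1 / (Y+1) = x2 / (Y+1))%nat ->
  Z.abs (Z.of_nat x1 - Z.of_nat x2) <= Z.of_nat Y.
Proof.
intro H.
pose proof (Nat.div_mod x1 (Y+1) ltac:(lia)). pose proof (Nat.div_mod x2 (Y+1) ltac:(lia)).
pose proof (Nat.mod_upper_bound x1 (Y+1) ltac:(lia)). pose proof (Nat.mod_upper_bound x2 (Y+1) ltac:(lia)).
rewrite H in *. lia.
Qed.

Lemma code_inj (x1 x2 : nat) (B1 : exists p, BadP x1 p) (B2 : exists p, BadP x2 p) :
  code x1 = code x2 -> x1 = x2.
Proof.
intro Hc.
pose proof (epsilon_spec (inhabits (0%Z,0%Z)) (BadP x1) B1) as W1.
pose proof (epsilon_spec (inhabits (0%Z,0%Z)) (BadP x2) B2) as W2.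
unfold code, wit in Hc. fold (wit x1) (wit x2) in *.
destruct (wit x1) as [y1 M1]. destruct (wit x2) as [y2 M2].
unfold BadP in W1, W2. simpl in *.
destruct W1 as [Hy1 [He1 Hb1]]. destruct W2 as [Hy2 [He2 Hb2]].
pose proof (e_le_E _ Hb1). pose proof (e_le_E _ Hb2).
injection Hc as Hy Hee Hquot.
assert (y1 = y2) by lia. subst y2.
set (e1 := a * Z.of_nat x1 * y1 - M1 * q) in *.
set (e2 := a * Z.of_nat x2 * y1 - M2 * q) in *.
assert (e1 = e2) by lia.
pose proof (same_quot _ _ Hquot) as Hd.
set (d := Z.of_nat x1 - Z.of_nat x2) in *.
assert (Hqyd : (q | y1 * d)).
{ apply (Z.gauss q a). exists (M1 - M2). unfold d. lia. rewrite Z.gcd_comm. exact Hg. }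
assert (Hqed : (q | e1 * d)).
{ destruct Hqyd as [k Hk]. exists (a * Z.of_nat x1 * k - M1 * d). unfold e1.
  replace ((a * Z.of_nat x1 * y1 - M1 * q) * d) with (a * Z.of_nat x1 * (y1 * d) - M1 * q * d) by ring.
  rewrite Hk. ring. }
assert (Hz : e1 * d = 0).
{ apply (div_small_zero q); auto. rewrite Z.abs_mul.
  assert (Z.abs e1 * Z.abs d <= Z.abs e1 * Z.of_nat Y) by (apply Z.mul_le_mono_nonneg_l; lia).
  assert (Z.abs e1 > 0) by lia. nia. }
assert (d = 0). { apply Z.mul_eq_0 in Hz as [Hz|Hz]; [lia|exact Hz]. }
unfold d in *. lia.
Qed.

Lemma core : (Ym * (2 * E + 1) * (n / (Y+1) + 1) < length (PiB.PL Y n))%nat ->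
  exists x y M, PiB.primeb x = true /\ (Y < x <= n)%nat /\ 1 <= y <= Z.of_nat Y /\
     Z.abs (a * Z.of_nat x * y - M * q) * (Z.of_nat Y + 1) <= q /\
     (a * Z.of_nat x * y - M * q = 0 \/ Z.of_nat Ym < y).
Proof.
intro Hlen. apply NNPP; intro Hno.
assert (Hbad : forall x, In x (PiB.PL Y n) -> exists p, BadP x p).
{ intros x Hx. destruct (PiB.PL_in _ _ _ Hx) as [Hp [H1 H2]].
  destruct (dirichlet (a * Z.of_nat x) q (Z.of_nat Y) Hq ltac:(lia)) as [y [M [Hy Hb]]].
  exists (y, M). unfold BadP; simpl.
  assert (~ (a * Z.of_nat x * y - M * q = 0 \/ Z.of_nat Ym < y)) as Hn.
  { intro Hc. apply Hno. exists x, y, M. repeat split; auto; lia. }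
  repeat split; try lia; auto. }
set (cod := list_prod (list_prod (seq 1 Ym) (seq 0 (2*E+1))) (seq 0 (n/(Y+1)+1))).
assert (Hincl : incl (map code (PiB.PL Y n)) cod).
{ intros c Hc. apply in_map_iff in Hc as [x [<- Hx]].
  destruct (PiB.PL_in _ _ _ Hx) as [Hp [H1 H2]].
  pose proof (epsilon_spec (inhabits (0%Z,0%Z)) (BadP x) (Hbad x Hx)) as W.
  unfold code. fold (wit x) in *. destruct (wit x) as [y M]. unfold BadP in W; simpl in *.
  destruct W as [Hy [He Hb]]. pose proof (e_le_E _ Hb).
  unfold cod. apply in_prod_iff. split; [apply in_prod_iff; split|]; apply in_seq; try lia.
  split; [lia|]. assert (Nat.div x (Y+1) <= Nat.div n (Y+1))%nat by (apply Nat.div_le_mono; lia). lia. }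
assert (Hnd : NoDup (map code (PiB.PL Y n))).
{ apply NoDup_map_NoDup_ForallPairs; [|apply PiB.PL_nodup].
  intros x1 x2 H1 H2 Hc. apply code_inj; auto. }
pose proof (NoDup_incl_length Hnd Hincl) as Hl.
unfold cod in Hl. rewrite length_map, !length_prod, !length_seq in Hl. lia.
Qed.

End Core.

Open Scope R_scope.

Lemma Rp_pos N y : 0 < N -> 0 < Rpower N y.
Proof. intros. unfold Rpower. apply exp_pos. Qed.

Lemma Rp_ge1 N y : 1 <= N -> 0 <= y -> 1 <= Rpower N y.
Proof. intros. rewrite <- (Rpower_O N) by lra. apply Rle_Rpower; lra. Qed.

Lemma ln_nonneg N : 1 <= N -> 0 <= ln N.
Proof. intros. destruct (Req_dec N 1) as [->|]. rewrite ln_1; lra.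
  rewrite <- ln_1. left. apply ln_increasing; lra. Qed.

Lemma ln_le' x y : 0 < x -> x <= y -> ln x <= ln y.
Proof. intros. destruct (Req_dec x y) as [->|]; [lra|]. left. apply ln_increasing; lra. Qed.

Lemma ln_le_Rp t N : 0 < t -> 1 <= N -> t * ln N <= Rpower N t.
Proof. intros. unfold Rpower. pose proof (exp_ineq1_le (t * ln N)). lra. Qed.

Lemma ell_bound (n : nat) (N : R) : (1 <= n)%nat -> INR n <= N ->
  INR (S (Nat.log2 n)) * ln 2 <= ln N + ln 2.
Proof.
intros Hn HN. destruct (Nat.log2_spec n ltac:(lia)) as [H1 _].
apply le_INR in H1. rewrite pow_INR in H1. replace (INR 2) with 2 in H1 by (simpl; lra).
assert (ln (2 ^ Nat.log2 n) <= ln N).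
{ apply ln_le'. apply pow_lt; lra. lra. }
rewrite ln_pow in H by lra. rewrite S_INR. lra.
Qed.

Lemma ell_B t (n : nat) N : 0 < t -> (1 <= n)%nat -> INR n <= N -> 1 <= N ->
  INR (S (Nat.log2 n)) <= (1 / (t * ln 2) + 1) * Rpower N t.
Proof.
intros Ht Hn HnN HN.
pose proof (ell_bound n N Hn HnN). pose proof (ln_le_Rp t N Ht HN).
pose proof ln_lt_2. pose proof (Rp_ge1 N t HN ltac:(lra)).
set (L := INR (S (Nat.log2 n))) in *. set (P := Rpower N t) in *.
assert (L * ln 2 <= P / t + ln 2).
{ assert (ln N <= P / t). { apply (Rmult_le_reg_l t); [lra|]. field_simplify; lra. } lra. }
assert (L <= P / (t * ln 2) + 1).
{ apply (Rmult_le_reg_r (ln 2)); [lra|]. replace ((P / (t * ln 2) + 1) * ln 2) with (P / t + ln 2) by (field; lra). lra. }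
assert (P / (t * ln 2) = 1 / (t * ln 2) * P) by (field; lra).
assert (0 < 1 / (t * ln 2)) by (apply Rdiv_lt_0_compat; nra).
nra.
Qed.


Lemma count_ineq (l t N q P Pd Nd C' V E K len Ym : R) :
  1 <= l -> 0 < t -> 1 <= N -> 1 <= q -> q <= P -> t <= N -> N <= P ->
  0 < Pd -> 0 < Nd -> P = Pd * Nd -> P*P*P = N^4 -> 0 < C' ->
  N < 16 * l * t -> V = q * Pd / (C' * t^2) -> 0 <= E -> E * t <= q -> 0 <= K <= 8 * l ->
  N <= 8 * l * len -> 786432 * l^5 < C' * Nd -> 0 <= Ym <= V ->
  Ym * (2*E+1) * K < len.
Proof.
intros Hl Ht HN Hq HqP HtN HNP HPd HNd HP HP3 HC Hlt HV HE HEt HK Hlen Hc HYm.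
assert (HVp : 0 <= V) by lra.
assert (H1 : 2*E+1 <= 3*P/t).
{ assert (E <= q/t) by (apply (Rmult_le_reg_r t); [lra|]; field_simplify; lra).
  assert (q/t <= P/t) by (apply Rmult_le_compat_r; [left; apply Rinv_0_lt_compat; lra|lra]).
  assert (1 <= P/t) by (apply (Rmult_le_reg_r t); [lra|]; field_simplify; lra).
  replace (3*P/t) with (2*(P/t) + P/t) by (field; lra). lra. }
assert (A1 : Ym * (2*E+1) * K <= V * (3*P/t) * (8*l)).
{ apply Rmult_le_compat; try nra. }
assert (A2 : V * (3*P/t) * (8*l) <= 24 * l * N^4 / (C' * Nd * t^3)).
{ rewrite HV.
  replace (q * Pd / (C' * t ^ 2) * (3 * P / t) * (8 * l)) with (24 * l * (q * P * Pd) / (C' * t^3)) by (field; lra).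
  replace (24 * l * N ^ 4 / (C' * Nd * t ^ 3)) with (24 * l * (P * P * Pd) / (C' * t^3)).
  2: { rewrite <- HP3. rewrite HP at 3. field. repeat split; try lra. }
  apply Rmult_le_compat_r. left; apply Rinv_0_lt_compat. apply Rmult_lt_0_compat; [lra|]. apply pow_lt; lra.
  apply Rmult_le_compat_l; [lra|]. apply Rmult_le_compat_r; [lra|]. apply Rmult_le_compat_r; nra. }
assert (A3 : 24 * l * N^4 / (C' * Nd * t^3) < N/(8*l)).
{ assert (Ht3 : N^3 < (16*l)^3 * t^3).
  { replace ((16*l)^3 * t^3) with ((16*l*t)^3) by ring. set (u := 16*l*t) in *. assert (0<N) by lra. assert (N*N < u*u) by nra. simpl. nra. }
  apply (Rmult_lt_reg_r (8 * l * (C' * Nd * t^3))). 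
  { apply Rmult_lt_0_compat; [lra|]. apply Rmult_lt_0_compat; [nra|]. apply pow_lt; lra. }
  replace (24 * l * N ^ 4 / (C' * Nd * t ^ 3) * (8 * l * (C' * Nd * t ^ 3))) with (192 * l^2 * N^4)
    by (field; repeat split; try lra; apply pow_nonzero; lra).
  replace (N / (8 * l) * (8 * l * (C' * Nd * t ^ 3))) with (N * (C' * Nd) * t^3) by (field; lra).
  assert (H4096 : N^3 <= 4096 * l^3 * t^3) by (replace (4096 * l^3) with ((16*l)^3) by ring; lra).
  assert (0 < N^3) by (apply pow_lt; lra).
  assert (0 < l^2) by (apply pow_lt; lra).
  assert (N * (786432 * l^5) * t^3 < N * (C' * Nd) * t^3).
  { apply Rmult_lt_compat_r. apply pow_lt; lra. apply Rmult_lt_compat_l; lra. }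
  assert (192 * l^2 * N^4 <= N * (786432 * l^5) * t^3).
  { replace (N * (786432 * l^5) * t^3) with (192 * l^2 * N * (4096 * l^3 * t^3)) by ring.
    replace (192 * l^2 * N^4) with (192 * l^2 * N * N^3) by ring.
    apply Rmult_le_compat_l; [|lra]. assert (0 < N) by lra. nra. }
  lra. }
assert (A4 : N/(8*l) <= len).
{ apply (Rmult_le_reg_r (8*l)); [lra|]. field_simplify; lra. }
lra.
Qed.

Lemma err_bound (alpha a q M x y e t Ym V P Pd C' : R) :
  1 <= q -> 0 < t -> t <= x -> 1 <= y -> 0 < Pd -> Pd <= P -> 0 < C' ->
  e = a*x*y - M*q -> Rabs e * t <= q -> (e = 0 \/ Ym + 1 <= y) -> V < Ym + 1 ->
  V = q*Pd/(C' * t^2) ->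
  Rabs (alpha - a/q) <= 1/(q*P) ->
  Rabs (alpha - M/(x*y)) <= (1 + C')/(q*Pd).
Proof.
intros Hq Ht Htx Hy HPd HP HC He Heb Hcase HV HVd Ha.
assert (Hx : 0 < x) by lra.
assert (E : alpha - M/(x*y) = (alpha - a/q) + e/(q*x*y)) by (rewrite He; field; lra).
rewrite E. eapply Rle_trans; [apply Rabs_triang|].
assert (T1 : 1/(q*P) <= 1/(q*Pd)).
{ apply Rmult_le_compat_l; [lra|]. apply Rinv_le_contravar; nra. }
assert (T2 : Rabs (e/(q*x*y)) <= C'/(q*Pd)).
{ destruct Hcase as [He0|Hy2].
  - rewrite He0. unfold Rdiv. rewrite Rmult_0_l, Rabs_R0. apply Rmult_le_pos; [lra|].
    left; apply Rinv_0_lt_compat; nra.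
  - assert (Hqxy : 0 <= q*x*y) by (apply Rmult_le_pos; [apply Rmult_le_pos|]; lra). unfold Rdiv. rewrite Rabs_mult, Rabs_inv, (Rabs_pos_eq (q*x*y) Hqxy). assert (Hqxy2 : 0 < q*x*y) by (apply Rmult_lt_0_compat; [apply Rmult_lt_0_compat|]; lra).
    assert (HVp : 0 < V). { rewrite HVd. apply Rdiv_lt_0_compat; [nra|]. apply Rmult_lt_0_compat; [lra|]. apply pow_lt; lra. }
    assert (B1 : Rabs e <= q / t) by (apply (Rmult_le_reg_r t); [lra|]; field_simplify; lra).
    assert (B2 : t * t * V < x * y * t).
    { assert (t * t * V < t * t * (Ym+1)) by (apply Rmult_lt_compat_l; nra).
      assert (t * t * (Ym + 1) <= t * x * y).
      { rewrite Rmult_assoc, (Rmult_assoc t x y). apply Rmult_le_compat_l; [lra|].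
        apply Rmult_le_compat; lra. }
      lra. }
    assert (B3 : t * t * V = q * Pd / C') by (rewrite HVd; field; lra).
    rewrite B3 in B2.
    apply Rle_trans with (q / t * / (q * x * y)).
    { apply Rmult_le_compat_r; [left; apply Rinv_0_lt_compat; exact Hqxy2|lra]. }
    replace (q / t * / (q * x * y)) with (1 / (x * y * t)) by (field; repeat split; nra).
    replace (C' * / (q * Pd)) with (1 / (q * Pd / C')) by (field; repeat split; nra).
    apply Rmult_le_compat_l; [lra|]. apply Rinv_le_contravar; [|lra].
    apply Rdiv_lt_0_compat; nra. }
unfold Rdiv in *. lra.
Qed.

Lemma Rp_pow N y (k : nat) : 0 < N -> Rpower N y ^ k = Rpower N (y * INR k).
Proof. intros. rewrite <- Rpower_pow by (apply Rp_pos; lra). rewrite Rpower_mult. reflexivity. Qed.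

Lemma main_case (d B C' N alpha : R) (a q : Z) :
  0 < d <= 1 -> 0 < B -> C' = 786433 * B^5 ->
  2 <= N -> 32 * B * Rpower N (1/5) <= N ->
  (forall n : nat, (1 <= n)%nat -> INR n <= N -> INR (S (Nat.log2 n)) <= B * Rpower N (d/5)) ->
  (1 <= q)%Z -> IZR q <= Rpower N (4/3) -> Z.gcd a q = 1%Z ->
  Rabs (alpha - IZR a / IZR q) <= 1 / (IZR q * Rpower N (4/3)) ->
  exists a1 a2 q1 q2 : Z, (1 <= q1)%Z /\ IZR q1 <= N /\ (1 <= q2)%Z /\ IZR q2 <= N /\
    Rabs (alpha - IZR a1 / IZR q1 - IZR a2 / IZR q2) <= (1 + C') / (IZR q * Rpower N (4/3 - d)).
Proof.
intros Hd HB HC' HN2 HN5 Hell Hq HqP Hg Ha.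
assert (HC'p : 0 < C') by (rewrite HC'; apply Rmult_lt_0_compat; [lra|]; apply pow_lt; lra).
set (n := Z.to_nat (up N - 1)).
assert (Hn : INR n <= N /\ N < INR n + 1).
{ destruct (archimed N) as [A1 A2].
  assert (0 <= up N - 1)%Z. { assert (1 < up N)%Z by (apply lt_IZR; lra). lia. }
  unfold n. rewrite INR_IZR_INZ, Z2Nat.id by lia. rewrite minus_IZR. simpl. lra. }
destruct Hn as [HnN HNn].
assert (Hn1 : (1 <= n)%nat). { assert (INR 0 < INR n) by (simpl; lra). apply INR_lt in H. lia. }
set (l := S (Nat.log2 n)).
assert (Hl : INR l <= B * Rpower N (d/5)) by (apply Hell; auto).
assert (Hl15 : B * Rpower N (d/5) <= B * Rpower N (1/5)).
{ apply Rmult_le_compat_l; [lra|]. apply Rle_Rpower; lra. }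
assert (H16 : (16 * l < n)%nat).
{ apply INR_lt. rewrite mult_INR. simpl (INR 16). replace (INR 16) with 16 by (simpl; lra). lra. }
assert (Hl1 : (1 <= l)%nat) by (unfold l; lia).
assert (Hn2l : (n < 2 ^ l)%nat) by (apply Nat.log2_spec; lia).
set (Y := (n / (8 * l))%nat).
assert (HY1 : (8 * l * Y <= n)%nat) by (apply Nat.Div0.mul_div_le).
assert (HY2 : (n < 8 * l * (Y + 1))%nat).
{ pose proof (Nat.div_mod n (8*l) ltac:(lia)). pose proof (Nat.mod_upper_bound n (8*l) ltac:(lia)).
  fold Y in H, H0. nia. }
assert (HY3 : (1 <= Y)%nat) by (apply Nat.div_le_lower_bound; lia).
assert (HYn : (Y + 1 <= n)%nat) by nia.
set (len := length (PiB.PL Y n)).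
assert (Hlen : (n <= 4 * l * len)%nat).
{ pose proof (PiB.PL_len' Y n l ltac:(lia) Hn2l ltac:(lia)). fold len in H. nia. }
set (E := Z.to_nat (q / (Z.of_nat Y + 1))).
assert (HE : (Z.of_nat E * (Z.of_nat Y + 1) <= q)%Z).
{ unfold E. rewrite Z2Nat.id by (apply Z.div_pos; lia). rewrite Z.mul_comm. apply Z.mul_div_le. lia. }
set (K := (n / (Y + 1) + 1)%nat).
assert (HK : (K <= 8 * l)%nat).
{ unfold K. assert (n / (Y+1) < 8 * l)%nat by (apply Nat.Div0.div_lt_upper_bound; nia). lia. }
set (P := Rpower N (4/3)). set (Pd := Rpower N (4/3 - d)). set (Nd := Rpower N d).
assert (HNpos : 0 < N) by lra.
assert (HPd : 0 < Pd) by (apply Rp_pos; lra).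
assert (HNd : 0 < Nd) by (apply Rp_pos; lra).
assert (HP : P = Pd * Nd) by (unfold P, Pd, Nd; rewrite <- Rpower_plus; f_equal; ring).
assert (HP3 : P * P * P = N ^ 4).
{ unfold P. rewrite <- !Rpower_plus. rewrite <- Rpower_pow by lra. f_equal. simpl. lra. }
assert (HNP : N <= P).
{ unfold P. rewrite <- (Rpower_1 N) at 1 by lra. apply Rle_Rpower; lra. }
set (t := INR Y + 1).
assert (Ht : 1 <= t) by (unfold t; pose proof (pos_INR Y); lra).
set (V := IZR q * Pd / (C' * t^2)).
assert (HV0 : 0 <= V).
{ unfold V. apply Rmult_le_pos. apply Rmult_le_pos; [apply IZR_le; lia|lra].
  left. apply Rinv_0_lt_compat. apply Rmult_lt_0_compat; [lra|]. apply pow_lt; lra. }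
set (Ym := Z.to_nat (up V - 1)).
assert (HYm : INR Ym <= V < INR Ym + 1).
{ destruct (archimed V) as [A1 A2].
  assert (0 <= up V - 1)%Z. { assert (0 < up V)%Z by (apply lt_IZR; lra). lia. }
  unfold Ym. rewrite INR_IZR_INZ, Z2Nat.id by lia. rewrite minus_IZR. simpl. lra. }
assert (Hcount : (Ym * (2 * E + 1) * K < len)%nat).
{ apply INR_lt. rewrite !mult_INR, plus_INR, mult_INR.
  replace (INR 2) with 2 by (simpl; lra). replace (INR 1) with 1 by (simpl; lra).
  apply (count_ineq (INR l) t N (IZR q) P Pd Nd C' V (INR E) (INR K) (INR len) (INR Ym)).
  - replace 1 with (INR 1) by (simpl; lra). apply le_INR. lia.
  - lra.
  - lra.
  - apply IZR_le in Hq. exact Hq.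
  - exact HqP.
  - unfold t. apply le_INR in HYn. rewrite plus_INR in HYn. simpl in HYn. lra.
  - exact HNP.
  - exact HPd.
  - exact HNd.
  - exact HP.
  - exact HP3.
  - exact HC'p.
  - apply lt_INR in HY2. rewrite !mult_INR, plus_INR in HY2. simpl (INR 1) in HY2.
    replace (INR 8) with 8 in HY2 by (simpl; lra). fold t in HY2.
    assert (8 * INR l * t >= 8) by (assert (1 <= INR l) by (replace 1 with (INR 1) by (simpl; lra); apply le_INR; lia); nra).
    lra.
  - reflexivity.
  - apply pos_INR.
  - apply IZR_le in HE. rewrite mult_IZR, plus_IZR, <- INR_IZR_INZ, <- INR_IZR_INZ in HE. exact HE.
  - split; [apply pos_INR|]. apply le_INR in HK. rewrite mult_INR in HK. replace (INR 8) with 8 in HK by (simpl; lra). exact HK.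
  - apply le_INR in Hlen. rewrite !mult_INR in Hlen. replace (INR 4) with 4 in Hlen by (simpl; lra).
    assert (1 <= INR n) by (replace 1 with (INR 1) by (simpl; lra); apply le_INR; lia). lra.
  - assert (Hl5 : INR l ^ 5 <= B^5 * Nd).
    { unfold Nd. replace (Rpower N d) with (Rpower N (d/5) ^ 5)
        by (rewrite Rp_pow by lra; f_equal; simpl; field).
      rewrite <- Rpow_mult_distr. apply pow_incr. split; [apply pos_INR|lra]. }
    rewrite HC'. assert (0 < B^5 * Nd) by (apply Rmult_lt_0_compat; [apply pow_lt|]; lra). nra.
  - split; [apply pos_INR|lra]. }
destruct (core a q Y Ym n Hq Hg HY3 Hcount) as [x [y [M [Hpx [[HYx Hxn] [Hy [Heb Hcase]]]]]]].
destruct (PiB.prime_bez x (Z.to_nat y) Hpx ltac:(lia) ltac:(lia)) as [u [v Huv]].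
exists (- (M * Z.of_nat v))%Z, (M * Z.of_nat u)%Z, (Z.of_nat x), y.
assert (HxN : IZR (Z.of_nat x) <= N).
{ rewrite <- INR_IZR_INZ. apply le_INR in Hxn. lra. }
assert (HyN : IZR y <= N).
{ pose proof (IZR_le _ _ (proj2 Hy)) as Hy'. rewrite <- INR_IZR_INZ in Hy'.
  apply le_INR in HYn. rewrite plus_INR in HYn. simpl in HYn. lra. }
split; [lia|]. split; [exact HxN|]. split; [lia|]. split; [exact HyN|].
assert (Hy1 : 1 <= IZR y) by (apply IZR_le; lia).
assert (Hx1 : t <= IZR (Z.of_nat x)).
{ unfold t. rewrite <- INR_IZR_INZ. replace 1 with (INR 1) by (simpl; lra). rewrite <- plus_INR. apply le_INR. lia. }
assert (Huv' : IZR (Z.of_nat u) * IZR (Z.of_nat x) - IZR (Z.of_nat v) * IZR y = 1).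
{ change (u * x = v * Z.to_nat y + 1)%nat in Huv.
  assert (Hyz : y = Z.of_nat (Z.to_nat y)) by lia.
  assert (Hz : (Z.of_nat u * Z.of_nat x - Z.of_nat v * y = 1)%Z).
  { rewrite Hyz. rewrite <- !Nat2Z.inj_mul. lia. }
  rewrite <- !mult_IZR, <- minus_IZR, Hz. reflexivity. }
replace (alpha - IZR (- (M * Z.of_nat v)) / IZR (Z.of_nat x) - IZR (M * Z.of_nat u) / IZR y)
  with (alpha - IZR M / (IZR (Z.of_nat x) * IZR y)).
2: { rewrite opp_IZR, !mult_IZR.
     assert (Hx0 : IZR (Z.of_nat x) <> 0) by lra. assert (Hy0 : IZR y <> 0) by lra.
     replace (IZR M / (IZR (Z.of_nat x) * IZR y)) with
       (IZR M * (IZR (Z.of_nat u) * IZR (Z.of_nat x) - IZR (Z.of_nat v) * IZR y) / (IZR (Z.of_nat x) * IZR y))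
       by (rewrite Huv'; field; split; assumption).
     field. split; assumption. }
apply (err_bound alpha (IZR a) (IZR q) (IZR M) (IZR (Z.of_nat x)) (IZR y)
   (IZR (a * Z.of_nat x * y - M * q)) t (INR Ym) V P Pd C').
- apply IZR_le in Hq. exact Hq.
- lra.
- exact Hx1.
- exact Hy1.
- exact HPd.
- unfold Pd, P. apply Rle_Rpower; lra.
- exact HC'p.
- rewrite minus_IZR, !mult_IZR. reflexivity.
- rewrite <- abs_IZR. unfold t. rewrite INR_IZR_INZ. replace 1 with (IZR 1) by reflexivity.
  rewrite <- plus_IZR, <- mult_IZR. apply IZR_le. exact Heb.
- destruct Hcase as [H0|H0]; [left; rewrite H0; reflexivity|right].
  rewrite INR_IZR_INZ. replace 1 with (IZR 1) by reflexivity. rewrite <- plus_IZR. apply IZR_le. lia.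
- lra.
- reflexivity.
- exact Ha.
Qed.

Theorem corollary1 :
  forall eps : R, 0 < eps ->
  exists C : R, 0 < C /\
  forall (N alpha : R) (a q : Z),
    1 <= N ->
    (1 <= q)%Z ->
    IZR q <= Rpower N (4/3) ->
    Z.gcd a q = 1%Z ->
    Rabs (alpha - IZR a / IZR q) <= 1 / (IZR q * Rpower N (4/3)) ->
    exists (a1 a2 q1 q2 : Z),
      (1 <= q1)%Z /\ IZR q1 <= N /\
      (1 <= q2)%Z /\ IZR q2 <= N /\
      Rabs (alpha - IZR a1 / IZR q1 - IZR a2 / IZR q2)
        <= C / (IZR q * Rpower N (4/3 - eps)).
Proof.
intros eps Heps.
set (d := Rmin eps 1).
assert (Hd : 0 < d <= 1 /\ d <= eps).
{ unfold d, Rmin. destruct (Rle_dec eps 1); lra. }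
destruct Hd as [Hd Hde].
pose proof ln_lt_2 as Hln2.
set (B := 1 / (d/5 * ln 2) + 1).
assert (HB : 0 < B).
{ unfold B. assert (0 < 1 / (d/5 * ln 2)) by (apply Rdiv_lt_0_compat; [lra|]; apply Rmult_lt_0_compat; lra). lra. }
set (C' := 786433 * B^5).
assert (HC' : 0 < C') by (unfold C'; apply Rmult_lt_0_compat; [lra|apply pow_lt; lra]).
set (N0 := Rmax 2 ((32*B)^2)).
assert (HN0 : 2 <= N0) by apply Rmax_l.
assert (HN0' : (32*B)^2 <= N0) by apply Rmax_r.
set (C := 1 + C' + N0^4).
assert (HN04 : 0 < N0^4) by (apply pow_lt; lra).
exists C. split; [unfold C; lra|].
intros N alpha a q HN Hq HqP Hg Ha.
assert (HNp : 0 < N) by lra.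
assert (Hqr : 1 <= IZR q) by (apply IZR_le; lia).
assert (HPe : 0 < Rpower N (4/3 - eps)) by (apply Rp_pos; lra).
destruct (Rlt_or_le N N0) as [Hs|Hb].
- exists (up alpha - 1)%Z, 0%Z, 1%Z, 1%Z.
  split; [lia|]. split; [simpl; lra|]. split; [lia|]. split; [simpl; lra|].
  destruct (archimed alpha) as [A1 A2].
  rewrite minus_IZR. replace (IZR 1) with 1 by reflexivity.
  replace (alpha - (IZR (up alpha) - 1) / 1 - 0 / 1) with (alpha - IZR (up alpha) + 1) by field.
  rewrite Rabs_pos_eq by lra.
  assert (HN2 : Rpower N 2 = N^2) by (replace 2 with (INR 2) by (simpl; lra); apply Rpower_pow; lra).
  assert (Hq2 : IZR q <= N^2).
  { rewrite <- HN2. apply Rle_trans with (1 := HqP). apply Rle_Rpower; lra. }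
  assert (HP2 : Rpower N (4/3 - eps) <= N^2).
  { rewrite <- HN2. apply Rle_Rpower; lra. }
  assert (HN2b : N^2 <= N0^2) by (apply pow_incr; lra).
  assert (Hprod : IZR q * Rpower N (4/3 - eps) <= N0^4).
  { replace (N0^4) with (N0^2 * N0^2) by ring. apply Rmult_le_compat; lra. }
  apply Rle_trans with 1; [lra|].
  apply (Rmult_le_reg_r (IZR q * Rpower N (4/3 - eps))); [nra|].
  unfold Rdiv. rewrite Rmult_assoc, Rinv_l by nra. unfold C. lra.
- assert (H2 : 2 <= N) by lra.
  assert (H5 : 32 * B * Rpower N (1/5) <= N).
  { assert (Hs : 32 * B <= sqrt N).
    { rewrite <- (sqrt_square (32 * B)) by lra. apply sqrt_le_1_alt. simpl in HN0'. lra. }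
    assert (Hs2 : sqrt N <= Rpower N (4/5)).
    { rewrite <- Rpower_sqrt by lra. apply Rle_Rpower; lra. }
    assert (HNs : N = Rpower N (1/5) * Rpower N (4/5)).
    { rewrite <- Rpower_plus. replace (1/5 + 4/5) with 1 by field. rewrite Rpower_1; lra. }
    assert (0 < Rpower N (1/5)) by (apply Rp_pos; lra).
    rewrite HNs at 2. rewrite Rmult_comm. apply Rmult_le_compat_l; lra. }
  assert (Hell : forall n : nat, (1 <= n)%nat -> INR n <= N -> INR (S (Nat.log2 n)) <= B * Rpower N (d/5)).
  { intros n Hn HnN. apply ell_B; auto; lra. }
  destruct (main_case d B C' N alpha a q Hd HB eq_refl H2 H5 Hell Hq HqP Hg Ha)
    as [a1 [a2 [q1 [q2 [H1 [H2' [H3 [H4 H5']]]]]]]].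
  exists a1, a2, q1, q2. repeat split; auto.
  apply Rle_trans with (1 := H5').
  assert (HPd : 0 < Rpower N (4/3 - d)) by (apply Rp_pos; lra).
  assert (HPle : Rpower N (4/3 - eps) <= Rpower N (4/3 - d)) by (apply Rle_Rpower; lra).
  unfold Rdiv. apply Rmult_le_compat; [lra| left; apply Rinv_0_lt_compat; nra |unfold C; lra|].
  apply Rinv_le_contravar; [nra|]. apply Rmult_le_compat_l; lra.
Qed.
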